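(* Let $f:\mathcal{D}_M\to\mathbb{R}$ be continuous, where $M>0$ and $$\mathcal{D}_M=\{(t,x,y,z):\ 0\le t\le 1,\ |x|\le M_0M,\ |y|\le M_1M,\ |z|\le M_2M\},\qquad M_0=\tfrac{1}{12},\ M_1=\tfrac18,\ M_2=\tfrac12 .$$ Assume there are constants $L_0,L_1,L_2\ge 0$ such that $|f(t,x,y,z)|\le M$ for all $(t,x,y,z)\in\mathcal{D}_M$, $$|f(t,x_2,y_2,z_2)-f(t,x_1,y_1,z_1)|\le L_0|x_2-x_1|+L_1|y_2-y_1|+L_2|z_2-z_1|$$ for all $(t,x_i,y_i,z_i)\in\mathcal{D}_M$ ($i=1,2$), and $q:=L_0M_0+L_1M_1+L_2M_2<1$. Consider the iteration: $\varphi_0(t)=f(t,0,0,0)$ and, for $k=0,1,\dots$, $$u_k(t)=\int_0^1G_0(t,s)\varphi_k(s)\,ds,\quad y_k(t)=\int_0^1G_1(t,s)\varphi_k(s)\,ds,\quad z_k(t)=\int_0^1G_2(t,s)\varphi_k(s)\,ds,$$ $$\varphi_{k+1}(t)=f(t,u_k(t),y_k(t),z_k(t)),$$ and set $p_k=\dfrac{q^k}{1-q}\|\varphi_1-\varphi_0\|$, where $\|\cdot\|$ is the maximum norm on $[0,1]$. Let $u$ be the (unique) solution of the boundary value problem $$u'''(t)=f(t,u(t),u'(t),u''(t)),\ 0<t<1,\qquad u(0)=0,\ u'(0)=0,\ u'(1)=0,$$ satisfying $|u(t)|\le M_0M$, $|u'(t)|\le M_1M$, $|u''(t)|\le M_2M$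 on $[0,1]$. Then the iterative method converges and for all $k\ge 0$ $$\|u_k-u\|\le M_0p_k,\qquad \|u_k'-u'\|\le M_1p_k,\qquad \|u_k''-u''\|\le M_2p_k .$$
   Context: The kernels are $G_0(t,s)=\frac{s}{2}(t^2-2t+s)$ for $0\le s\le t\le1$ and $G_0(t,s)=\frac{t^2}{2}(s-1)$ for $0\le t\le s\le 1$; $G_1(t,s)=s(t-1)$ for $0\le s\le t\le 1$ and $G_1(t,s)=t(s-1)$ for $0\le t\le s\le 1$; $G_2(t,s)=s$ for $0\le s\le t\le 1$ and $G_2(t,s)=s-1$ for $0\le t\le s\le 1$. ($G_0$ is the Green function of $u'''=\varphi$, $u(0)=u'(0)=u'(1)=0$, and $G_1=\partial_tG_0$, $G_2=\partial_t^2G_0$.) The constants satisfy $M_n=\max_{0\le t\le 1}\int_0^1|G_n(t,s)|\,ds$ for $n=0,1,2$. Under these hypotheses the boundary value problem has exactly one solution with the stated bounds. *)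

(* Defs.v *)
From Stdlib Require Import Reals Lra.
From Coquelicot Require Import Coquelicot.
Open Scope R_scope.

Definition M0 : R := 1/12.
Definition M1 : R := 1/8.
Definition M2 : R := 1/2.

Definition G0 (t s : R) : R :=
  if Rle_dec s t then s / 2 * (t ^ 2 - 2 * t + s) else t ^ 2 / 2 * (s - 1).
Definition G1 (t s : R) : R :=
  if Rle_dec s t then s * (t - 1) else t * (s - 1).
Definition G2 (t s : R) : R :=
  if Rle_dec s t then s else s - 1.

Definition inD (M t x y z : R) : Prop :=
  0 <= t <= 1 /\ Rabs x <= M0 * M /\ Rabs y <= M1 * M /\ Rabs z <= M2 * M.

Definition continuous_on_D (M : R) (f : R -> R -> R -> R -> R) : Prop :=
  forall t x y z, inD M t x y z ->
  forall eps : R, 0 < eps -> exists delta : R, 0 < delta /\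
    forall t' x' y' z', inD M t' x' y' z' ->
      Rabs (t' - t) < delta -> Rabs (x' - x) < delta ->
      Rabs (y' - y) < delta -> Rabs (z' - z) < delta ->
      Rabs (f t' x' y' z' - f t x y z) < eps.

Fixpoint phi (f : R -> R -> R -> R -> R) (k : nat) (t : R) : R :=
  match k with
  | O => f t 0 0 0
  | S k' => f t (RInt (fun s => G0 t s * phi f k' s) 0 1)
                (RInt (fun s => G1 t s * phi f k' s) 0 1)
                (RInt (fun s => G2 t s * phi f k' s) 0 1)
  end.

Definition uk (f : R -> R -> R -> R -> R) (k : nat) (t : R) : R :=
  RInt (fun s => G0 t s * phi f k s) 0 1.
Definition yk (f : R -> R -> R -> R -> R) (k : nat) (t : R) : R :=
  RInt (fun s => G1 t s * phi f k s) 0 1.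
Definition zk (f : R -> R -> R -> R -> R) (k : nat) (t : R) : R :=
  RInt (fun s => G2 t s * phi f k s) 0 1.

Definition supnorm01 (g : R -> R) : R :=
  real (Lub_Rbar (fun r => exists t, 0 <= t <= 1 /\ r = Rabs (g t))).

Definition continuous_on01 (g : R -> R) : Prop :=
  forall t, 0 <= t <= 1 -> forall eps : R, 0 < eps -> exists delta : R, 0 < delta /\
    forall t', 0 <= t' <= 1 -> Rabs (t' - t) < delta -> Rabs (g t' - g t) < eps.

(* Main.v *)
Require Import Defs.
From Stdlib Require Import Reals Lra Psatz.
From Coquelicot Require Import Coquelicot.
Open Scope R_scope.

Lemma RInt_minusR (f g : R -> R) a b : ex_RInt f a b -> ex_RInt g a b ->
  RInt (fun x => f x - g x) a b = RInt f a b - RInt g a b.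
Proof. intros H1 H2. exact (RInt_minus f g a b H1 H2). Qed.
Lemma ex_RInt_minusR (f g : R -> R) a b : ex_RInt f a b -> ex_RInt g a b ->
  ex_RInt (fun x => f x - g x) a b.
Proof. intros H1 H2. exact (ex_RInt_minus f g a b H1 H2). Qed.
Lemma RInt_scalR (f : R -> R) a b k : ex_RInt f a b ->
  RInt (fun x => k * f x) a b = k * RInt f a b.
Proof. intros H1. exact (RInt_scal f a b k H1). Qed.
Lemma ex_RInt_scalR (f : R -> R) a b k : ex_RInt f a b ->
  ex_RInt (fun x => k * f x) a b.
Proof. intros H1. exact (ex_RInt_scal f a b k H1). Qed.
Lemma RInt_ChaslesR (f : R -> R) a b c : ex_RInt f a b -> ex_RInt f b c ->
  RInt f a b + RInt f b c = RInt f a c.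
Proof. intros H1 H2. exact (RInt_Chasles f a b c H1 H2). Qed.
Lemma RInt_zeroR a b : RInt (fun _ => 0) a b = 0.
Proof. rewrite RInt_const. unfold scal; simpl. unfold mult; simpl. ring. Qed.

Lemma ex_RInt_contR (f : R -> R) a b : (forall z, Rmin a b <= z <= Rmax a b -> continuous f z) -> ex_RInt f a b.
Proof. intros H. exact (@ex_RInt_continuous R_CompleteNormedModule f a b H). Qed.

Definition clamp (x : R) : R := Rmax 0 (Rmin x 1).
Lemma clamp_in x : 0 <= clamp x <= 1.
Proof. unfold clamp, Rmax, Rmin. repeat destruct Rle_dec; lra. Qed.
Lemma clamp_id x : 0 <= x <= 1 -> clamp x = x.
Proof. unfold clamp, Rmax, Rmin. repeat destruct Rle_dec; lra. Qed.
Lemma clamp_lip x y : Rabs (clamp y - clamp x) <= Rabs (y - x).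
Proof. unfold clamp, Rmax, Rmin. repeat destruct Rle_dec; unfold Rabs; repeat destruct Rcase_abs; lra. Qed.

Lemma cont_clamp (h : R -> R) : continuous_on01 h -> forall x, continuous (fun s => h (clamp s)) x.
Proof.
  intros Hc x. apply continuity_pt_filterlim.
  intros eps Heps.
  destruct (Hc (clamp x) (clamp_in x) eps Heps) as [d [Hd H]].
  exists d. split; [exact Hd|]. intros y [_ Hy]. simpl in *. unfold R_dist in *.
  apply H. apply clamp_in. eapply Rle_lt_trans; [apply clamp_lip|exact Hy].
Qed.

Lemma cont_on01_of (g gt : R -> R) : (forall x, 0 <= x <= 1 -> g x = gt x) ->
  (forall x, 0 <= x <= 1 -> continuous gt x) -> continuous_on01 g.
Proof.
  intros Heq Hc t Ht eps Heps.
  assert (H := proj2 (continuity_pt_filterlim gt t) (Hc t Ht) eps Heps).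
  destruct H as [d [Hd H]]. exists d. split; [exact Hd|].
  intros t' Ht' Hlt. rewrite !Heq by assumption.
  destruct (Req_dec t' t) as [->|Hne]. rewrite Rminus_diag, Rabs_R0; lra.
  apply (H t'). split. split; [exact I|auto]. exact Hlt.
Qed.

Lemma piece (F g1 g2 : R -> R) x :
 (forall s, continuous g1 s) -> (forall s, continuous g2 s) ->
 (forall s, 0 < s < 1 -> s < x -> F s = g1 s) -> (forall s, 0 < s < 1 -> x < s -> F s = g2 s) ->
 ex_RInt F 0 1 /\ RInt F 0 1 = RInt g1 0 (clamp x) + RInt g2 (clamp x) 1.
Proof.
  intros C1 C2 E1 E2.
  pose proof (clamp_in x) as Hc.
  assert (A1 : forall s, Rmin 0 (clamp x) < s < Rmax 0 (clamp x) -> g1 s = F s).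
  { intros s Hs. rewrite Rmin_left, Rmax_right in Hs by lra. symmetry; apply E1. lra.
    unfold clamp, Rmax, Rmin in *. repeat destruct Rle_dec; lra. }
  assert (A2 : forall s, Rmin (clamp x) 1 < s < Rmax (clamp x) 1 -> g2 s = F s).
  { intros s Hs. rewrite Rmin_left, Rmax_right in Hs by lra. symmetry; apply E2. lra.
    unfold clamp, Rmax, Rmin in *. repeat destruct Rle_dec; lra. }
  assert (I1 : ex_RInt F 0 (clamp x)).
  { eapply ex_RInt_ext. exact A1. apply ex_RInt_contR. intros; apply C1. }
  assert (I2 : ex_RInt F (clamp x) 1).
  { eapply ex_RInt_ext. exact A2. apply ex_RInt_contR. intros; apply C2. }
  split. eapply ex_RInt_Chasles; eassumption.
  rewrite <- (RInt_ChaslesR F 0 (clamp x) 1 I1 I2).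
  f_equal; apply RInt_ext; intros; symmetry; auto.
Qed.

Lemma RInt_poly (P p : R -> R) a b : (forall x, is_derive P x (p x)) -> (forall x, continuous p x) ->
  RInt p a b = P b - P a.
Proof. intros H1 H2. apply is_RInt_unique. apply (is_RInt_derive P p a b); auto. Qed.

Lemma cont_prod (p g : R -> R) s : ex_derive p s -> continuous g s -> continuous (fun y => p y * g y) s.
Proof. intros H1 H2. apply (continuous_mult p g s). apply (@ex_derive_continuous R_AbsRing R_NormedModule); auto. auto. Qed.

Definition psi (h : R -> R) := fun s => h (clamp s).

Ltac contpp Hc := intros ?s; apply cont_prod; [auto_derive; auto | apply (cont_clamp _ Hc)].

Lemma exG0 h x : continuous_on01 h -> ex_RInt (fun s => G0 x s * h s) 0 1.
Proof.
  intros Hc.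
  apply (fun H1 H2 H3 H4 => proj1 (piece _ (fun s => (s / 2 * (x ^ 2 - 2 * x + s)) * psi h s)
      (fun s => (x ^ 2 / 2 * (s - 1)) * psi h s) x H1 H2 H3 H4)); [contpp Hc|contpp Hc| |].
  - intros s Hs Hsx. unfold G0, psi. rewrite clamp_id by lra. destruct Rle_dec; [auto|lra].
  - intros s Hs Hsx. unfold G0, psi. rewrite clamp_id by lra. destruct Rle_dec; [lra|auto].
Qed.
Lemma exG1 h x : continuous_on01 h -> ex_RInt (fun s => G1 x s * h s) 0 1.
Proof.
  intros Hc.
  apply (fun H1 H2 H3 H4 => proj1 (piece _ (fun s => (s * (x - 1)) * psi h s)
      (fun s => (x * (s - 1)) * psi h s) x H1 H2 H3 H4)); [contpp Hc|contpp Hc| |].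
  - intros s Hs Hsx. unfold G1, psi. rewrite clamp_id by lra. destruct Rle_dec; [auto|lra].
  - intros s Hs Hsx. unfold G1, psi. rewrite clamp_id by lra. destruct Rle_dec; [lra|auto].
Qed.
Lemma exG2 h x : continuous_on01 h -> ex_RInt (fun s => G2 x s * h s) 0 1.
Proof.
  intros Hc.
  apply (fun H1 H2 H3 H4 => proj1 (piece _ (fun s => s * psi h s)
      (fun s => (s - 1) * psi h s) x H1 H2 H3 H4)); [contpp Hc|contpp Hc| |].
  - intros s Hs Hsx. unfold G2, psi. rewrite clamp_id by lra. destruct Rle_dec; [auto|lra].
  - intros s Hs Hsx. unfold G2, psi. rewrite clamp_id by lra. destruct Rle_dec; [lra|auto].
Qed.

Ltac contpoly := intros ?s; apply (@ex_derive_continuous R_AbsRing R_NormedModule); auto_derive; auto.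

Lemma bound_gen (G K h : R -> R) B c :
  (forall s, 0 <= s <= 1 -> Rabs (h s) <= B) ->
  ex_RInt (fun s => G s * h s) 0 1 -> ex_RInt (fun s => K s * B) 0 1 ->
  (forall s, 0 < s < 1 -> Rabs (G s) <= K s) -> RInt (fun s => K s * B) 0 1 <= c ->
  Rabs (RInt (fun s => G s * h s) 0 1) <= c.
Proof.
  intros Hb I1 I2 HK Hc.
  assert (P : forall s, 0 < s < 1 -> Rabs (G s * h s) <= K s * B).
  { intros s Hs. rewrite Rabs_mult. apply Rmult_le_compat; try apply Rabs_pos; auto.
    apply Hb; lra. }
  apply Rabs_le. split.
  - assert (RInt (fun s => (-1) * (K s * B)) 0 1 <= RInt (fun s => G s * h s) 0 1).
    { apply RInt_le; auto. lra. apply ex_RInt_scalR; auto.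
      intros s Hs. specialize (P s Hs). apply Rabs_le_between in P. lra. }
    rewrite RInt_scalR in H by auto. lra.
  - eapply Rle_trans; [|exact Hc]. apply RInt_le; auto. lra.
    intros s Hs. specialize (P s Hs). apply Rabs_le_between in P. lra.
Qed.

Lemma boundG0 h B t : continuous_on01 h -> (forall s, 0 <= s <= 1 -> Rabs (h s) <= B) -> 0 <= t <= 1 ->
  Rabs (RInt (fun s => G0 t s * h s) 0 1) <= M0 * B.
Proof.
  intros Hc Hb Ht.
  assert (HB : 0 <= B). { specialize (Hb 0 ltac:(lra)). pose proof (Rabs_pos (h 0)). lra. }
  destruct (piece (fun s => (if Rle_dec s t then s/2*(2*t - t^2 - s) else t^2/2*(1-s)) * B)
     (fun s => s/2*(2*t - t^2 - s) * B) (fun s => t^2/2*(1-s) * B) t) as [I E].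
  contpoly. contpoly.
  intros s Hs Hst; destruct Rle_dec; [auto|lra].
  intros s Hs Hst; destruct Rle_dec; [lra|auto].
  apply (bound_gen _ _ h B _ Hb (exG0 h t Hc) I).
  - intros s Hs. unfold G0. destruct Rle_dec.
    + rewrite Rabs_left1. lra. assert (0 <= s) by lra. assert (t^2 - 2*t + s <= 0) by nra. nra.
    + rewrite Rabs_left1. lra. assert (0 <= t^2) by nra. nra.
  - rewrite E, clamp_id by auto.
    rewrite (RInt_poly (fun s => B*((2*t - t^2)*s^2/4 - s^3/6))).
    rewrite (RInt_poly (fun s => B*(t^2/2*(s - s^2/2)))).
    unfold M0. assert (0 <= B * ((1-t)^2*(1+2*t))) by (apply Rmult_le_pos; [lra| apply Rmult_le_pos; nra]).
    simpl; nra.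
    intros x; auto_derive; auto; simpl; field. contpoly.
    intros x; auto_derive; auto; simpl; field. contpoly.
Qed.

Lemma boundG1 h B t : continuous_on01 h -> (forall s, 0 <= s <= 1 -> Rabs (h s) <= B) -> 0 <= t <= 1 ->
  Rabs (RInt (fun s => G1 t s * h s) 0 1) <= M1 * B.
Proof.
  intros Hc Hb Ht.
  assert (HB : 0 <= B). { specialize (Hb 0 ltac:(lra)). pose proof (Rabs_pos (h 0)). lra. }
  destruct (piece (fun s => (if Rle_dec s t then s*(1-t) else t*(1-s)) * B)
     (fun s => s*(1-t) * B) (fun s => t*(1-s) * B) t) as [I E].
  contpoly. contpoly.
  intros s Hs Hst; destruct Rle_dec; [auto|lra].
  intros s Hs Hst; destruct Rle_dec; [lra|auto].
  apply (bound_gen _ _ h B _ Hb (exG1 h t Hc) I).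
  - intros s Hs. unfold G1. destruct Rle_dec.
    + rewrite Rabs_left1. nra. nra.
    + rewrite Rabs_left1. nra. nra.
  - rewrite E, clamp_id by auto.
    rewrite (RInt_poly (fun s => B*((1-t)*s^2/2))).
    rewrite (RInt_poly (fun s => B*(t*(s - s^2/2)))).
    unfold M1. assert (0 <= B * (1-2*t)^2) by (apply Rmult_le_pos; [lra|apply pow2_ge_0]).
    simpl; nra.
    intros x; auto_derive; auto; simpl; field. contpoly.
    intros x; auto_derive; auto; simpl; field. contpoly.
Qed.

Lemma boundG2 h B t : continuous_on01 h -> (forall s, 0 <= s <= 1 -> Rabs (h s) <= B) -> 0 <= t <= 1 ->
  Rabs (RInt (fun s => G2 t s * h s) 0 1) <= M2 * B.
Proof.
  intros Hc Hb Ht.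
  assert (HB : 0 <= B). { specialize (Hb 0 ltac:(lra)). pose proof (Rabs_pos (h 0)). lra. }
  destruct (piece (fun s => (if Rle_dec s t then s else 1-s) * B)
     (fun s => s * B) (fun s => (1-s) * B) t) as [I E].
  contpoly. contpoly.
  intros s Hs Hst; destruct Rle_dec; [auto|lra].
  intros s Hs Hst; destruct Rle_dec; [lra|auto].
  apply (bound_gen _ _ h B _ Hb (exG2 h t Hc) I).
  - intros s Hs. unfold G2. destruct Rle_dec.
    + rewrite Rabs_right. lra. lra.
    + rewrite Rabs_left1. lra. lra.
  - rewrite E, clamp_id by auto.
    rewrite (RInt_poly (fun s => B*(s^2/2))).
    rewrite (RInt_poly (fun s => B*(s - s^2/2))).
    unfold M2. assert (0 <= B * (t*(1-t))) by (apply Rmult_le_pos; nra).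
    simpl; nra.
    intros x; auto_derive; auto; simpl; field. contpoly.
    intros x; auto_derive; auto; simpl; field. contpoly.
Qed.

Lemma taylor_derive f x l K : (forall y, Rabs (f y - f x - (y - x) * l) <= K * (y-x)^2) -> is_derive f x l.
Proof.
  intros H. apply is_derive_Reals. intros eps Heps.
  assert (HK : 0 <= K). { specialize (H (x+1)). pose proof (Rabs_pos (f (x + 1) - f x - (x + 1 - x) * l)).
    replace ((x+1-x)^2) with 1 in H by ring. lra. }
  exists (mkposreal (eps / (K+1)) ltac:(apply Rdiv_lt_0_compat; lra)).
  intros h Hh Hlt. simpl in Hlt.
  specialize (H (x+h)). replace (x + h - x) with h in H by ring.
  replace ((f (x + h) - f x) / h - l) with ((f (x + h) - f x - h * l) / h) by (field; auto).
  rewrite Rabs_div by auto.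
  apply Rlt_div_l. apply Rabs_pos_lt; auto.
  eapply Rle_lt_trans; [exact H|].
  replace (h^2) with (Rabs h * Rabs h) by (rewrite <- Rabs_mult; rewrite Rabs_right; [ring| nra]).
  assert (0 < Rabs h) by (apply Rabs_pos_lt; auto).
  assert (Rabs h * (K+1) < eps). { apply Rlt_div_r in Hlt; lra. }
  nra.
Qed.

Lemma supp_bound g K m M' : ex_RInt g 0 1 -> (forall s, 0 <= s <= 1 -> Rabs (g s) <= K) ->
  (forall s, 0 < s < 1 -> (s < m \/ M' < s) -> g s = 0) -> m <= M' ->
  Rabs (RInt g 0 1) <= K * (M' - m).
Proof.
  intros I Hb Hz Hm.
  assert (HK : 0 <= K). { specialize (Hb 0 ltac:(lra)). pose proof (Rabs_pos (g 0)). lra. }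
  pose proof (clamp_in m). pose proof (clamp_in M').
  assert (Hab : clamp m <= clamp M') by (unfold clamp, Rmax, Rmin; repeat destruct Rle_dec; lra).
  assert (Hab2 : clamp M' - clamp m <= M' - m) by (unfold clamp, Rmax, Rmin; repeat destruct Rle_dec; lra).
  assert (I1 : ex_RInt g 0 (clamp M')) by (apply (ex_RInt_Chasles_1 g 0 _ 1); auto; lra).
  assert (I2 : ex_RInt g (clamp M') 1) by (apply (ex_RInt_Chasles_2 g 0 _ 1); auto; lra).
  assert (I3 : ex_RInt g 0 (clamp m)) by (apply (ex_RInt_Chasles_1 g 0 _ (clamp M')); auto; lra).
  assert (I4 : ex_RInt g (clamp m) (clamp M')) by (apply (ex_RInt_Chasles_2 g 0 _ (clamp M')); auto; lra).
  rewrite <- (RInt_ChaslesR g 0 (clamp M') 1 I1 I2).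
  rewrite <- (RInt_ChaslesR g 0 (clamp m) (clamp M') I3 I4).
  rewrite (RInt_ext g (fun _ => 0) 0 (clamp m)).
  rewrite (RInt_ext g (fun _ => 0) (clamp M') 1).
  rewrite !RInt_zeroR, Rplus_0_l, Rplus_0_r.
  eapply Rle_trans. apply abs_RInt_le_const; auto.
  intros t Ht. apply Hb. lra. nra.
  - intros s Hs. rewrite Rmin_left, Rmax_right in Hs by lra. apply Hz. lra.
    right. unfold clamp, Rmax, Rmin in *; repeat destruct Rle_dec; lra.
  - intros s Hs. rewrite Rmin_left, Rmax_right in Hs by lra. apply Hz. lra.
    left. unfold clamp, Rmax, Rmin in *; repeat destruct Rle_dec; lra.
Qed.

Lemma kerD0 x y s : 0 <= s <= 1 -> Rabs (G0 y s - G0 x s - (y-x) * G1 x s) <= 2*(y-x)^2.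
Proof.
  intros Hs. unfold G0, G1. apply Rabs_le.
  destruct (Rle_dec s y), (Rle_dec s x).
  - replace (s / 2 * (y ^ 2 - 2 * y + s) - s / 2 * (x ^ 2 - 2 * x + s) - (y - x) * (s * (x - 1)))
      with (s * (y-x)^2/2) by field. assert (0 <= (y-x)^2) by apply pow2_ge_0. split; nra.
  - replace (s / 2 * (y ^ 2 - 2 * y + s) - x ^ 2 / 2 * (s - 1) - (y - x) * (x * (s - 1)))
      with ((s-1)*(y-x)^2/2 + (y-s)^2/2) by field. assert (0 <= (y-x)^2) by apply pow2_ge_0.
    assert ((y-s)^2 <= (y-x)^2) by nra. assert (0 <= (y-s)^2) by apply pow2_ge_0. split; nra.
  - replace (y ^ 2 / 2 * (s - 1) - s / 2 * (x ^ 2 - 2 * x + s) - (y - x) * (s * (x - 1)))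
      with ((s-1)*(y-x)^2/2 - (x-s)*((x-s)/2 + (y-x))) by field. assert (0 <= (y-x)^2) by apply pow2_ge_0.
    assert (0 <= (x-s)*((x-s)/2 + (x-y))) by nra.
    assert ((x-s)*((x-s)/2 + (x-y)) <= 2 * (y-x)^2) by nra. split; nra.
  - replace (y ^ 2 / 2 * (s - 1) - x ^ 2 / 2 * (s - 1) - (y - x) * (x * (s - 1)))
      with ((s-1)*(y-x)^2/2) by field. assert (0 <= (y-x)^2) by apply pow2_ge_0. split; nra.
Qed.

Lemma kerD1 x y s : Rabs (G1 y s - G1 x s - (y-x) * G2 x s) <= Rabs (y-x) /\
  (s < Rmin x y \/ Rmax x y < s -> G1 y s - G1 x s - (y-x) * G2 x s = 0).
Proof.
  unfold G1, G2, Rmin, Rmax. destruct (Rle_dec s y), (Rle_dec s x); destruct Rle_dec; split;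
  try (intros [H|H]; lra); try (intros _; ring);
  unfold Rabs; repeat destruct Rcase_abs; nra.
Qed.

Lemma kerD2 x y s : Rabs (G2 y s - G2 x s) <= 1 /\
  (s < Rmin x y \/ Rmax x y < s -> G2 y s - G2 x s = 0).
Proof.
  unfold G2, Rmin, Rmax. destruct (Rle_dec s y), (Rle_dec s x); destruct Rle_dec; split;
  try (intros [H|H]; lra); try (intros _; ring);
  unfold Rabs; repeat destruct Rcase_abs; nra.
Qed.


Definition Uop (h : R -> R) (t : R) : R := RInt (fun s => G0 t s * h s) 0 1.
Definition Yop (h : R -> R) (t : R) : R := RInt (fun s => G1 t s * h s) 0 1.
Definition Zop (h : R -> R) (t : R) : R := RInt (fun s => G2 t s * h s) 0 1.

Definition good (h : R -> R) B := continuous_on01 h /\ forall s, 0 <= s <= 1 -> Rabs (h s) <= B.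

Lemma combo3 (f g k : R -> R) c : ex_RInt f 0 1 -> ex_RInt g 0 1 -> ex_RInt k 0 1 ->
  RInt f 0 1 - RInt g 0 1 - c * RInt k 0 1 = RInt (fun s => f s - g s - c * k s) 0 1 /\
  ex_RInt (fun s => f s - g s - c * k s) 0 1.
Proof.
  intros I1 I2 I3.
  assert (I4 : ex_RInt (fun s => f s - g s) 0 1) by (apply ex_RInt_minusR; auto).
  assert (I5 : ex_RInt (fun s => c * k s) 0 1) by (apply ex_RInt_scalR; auto).
  split. rewrite (RInt_minusR (fun s => f s - g s) (fun s => c * k s)) by auto.
  rewrite RInt_minusR, RInt_scalR by auto. reflexivity.
  apply (ex_RInt_minusR (fun s => f s - g s) (fun s => c * k s)); auto.
Qed.

Lemma derU h B : good h B -> forall x, is_derive (Uop h) x (Yop h x).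
Proof.
  intros [Hc Hb] x. apply (taylor_derive _ _ _ (2*B)). intros y. unfold Uop, Yop.
  destruct (combo3 _ _ _ (y - x) (exG0 h y Hc) (exG0 h x Hc) (exG1 h x Hc)) as [E I].
  rewrite E.
  replace (2 * B * (y - x) ^ 2) with ((1 - 0) * (2 * (y-x)^2 * B)) by ring.
  apply abs_RInt_le_const. lra. exact I.
  intros s Hs.
  replace (G0 y s * h s - G0 x s * h s - (y - x) * (G1 x s * h s)) with
    ((G0 y s - G0 x s - (y-x) * G1 x s) * h s) by ring.
  rewrite Rabs_mult. apply Rmult_le_compat; try apply Rabs_pos. apply kerD0; auto. auto.
Qed.

Lemma absmaxmin (x y B : R) : Rabs (y - x) * B * (Rmax x y - Rmin x y) = B * (y - x) ^ 2.
Proof. unfold Rmin, Rmax; destruct Rle_dec; unfold Rabs; destruct Rcase_abs; first [ring | exfalso; lra]. Qed.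

Lemma derY h B : good h B -> forall x, is_derive (Yop h) x (Zop h x).
Proof.
  intros [Hc Hb] x. apply (taylor_derive _ _ _ B). intros y. unfold Yop, Zop.
  destruct (combo3 _ _ _ (y - x) (exG1 h y Hc) (exG1 h x Hc) (exG2 h x Hc)) as [E I].
  rewrite E.
  replace (B * (y - x) ^ 2) with ((Rabs (y-x) * B) * (Rmax x y - Rmin x y)).
  apply supp_bound. exact I.
  intros s Hs.
  replace (G1 y s * h s - G1 x s * h s - (y - x) * (G2 x s * h s)) with
    ((G1 y s - G1 x s - (y-x) * G2 x s) * h s) by ring.
  rewrite Rabs_mult. apply Rmult_le_compat; try apply Rabs_pos. apply kerD1; auto. auto.
  intros s Hs Hout.
  replace (G1 y s * h s - G1 x s * h s - (y - x) * (G2 x s * h s)) with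
    ((G1 y s - G1 x s - (y-x) * G2 x s) * h s) by ring.
  rewrite (proj2 (kerD1 x y s) Hout). apply Rmult_0_l.
  unfold Rmin, Rmax; destruct Rle_dec; lra.
  apply absmaxmin.
Qed.

Lemma lipZ h B : good h B -> forall x y, Rabs (Zop h y - Zop h x) <= B * Rabs (y - x).
Proof.
  intros [Hc Hb] x y. unfold Zop.
  destruct (combo3 _ _ _ 0 (exG2 h y Hc) (exG2 h x Hc) (exG2 h x Hc)) as [E I].
  replace (RInt (fun s => G2 y s * h s) 0 1 - RInt (fun s => G2 x s * h s) 0 1) with
    (RInt (fun s => G2 y s * h s) 0 1 - RInt (fun s => G2 x s * h s) 0 1 - 0 * RInt (fun s => G2 x s * h s) 0 1) by ring.
  rewrite E.
  replace (B * Rabs (y - x)) with ((1 * B) * (Rmax x y - Rmin x y)).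
  apply supp_bound. exact I.
  intros s Hs.
  replace (G2 y s * h s - G2 x s * h s - 0 * (G2 x s * h s)) with ((G2 y s - G2 x s) * h s) by ring.
  rewrite Rabs_mult. apply Rmult_le_compat; try apply Rabs_pos. apply kerD2; auto. auto.
  intros s Hs Hout.
  replace (G2 y s * h s - G2 x s * h s - 0 * (G2 x s * h s)) with ((G2 y s - G2 x s) * h s) by ring.
  rewrite (proj2 (kerD2 x y s) Hout). apply Rmult_0_l.
  unfold Rmin, Rmax; destruct Rle_dec; lra.
  unfold Rmin, Rmax; destruct Rle_dec; unfold Rabs; destruct Rcase_abs; lra.
Qed.


Lemma RInt_extR (f g : R -> R) a b : (forall x, Rmin a b < x < Rmax a b -> f x = g x) -> RInt f a b = RInt g a b.
Proof. intros H. exact (RInt_ext f g a b H). Qed.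

Lemma cont_const1 : continuous_on01 (fun _ => 1).
Proof. intros t Ht eps He. exists 1. split. lra. intros. rewrite Rminus_diag, Rabs_R0. lra. Qed.

Lemma intG2 y : 0 <= y <= 1 -> RInt (fun s => G2 y s * 1) 0 1 = y - 1/2.
Proof.
  intros Hy.
  destruct (piece (fun s => G2 y s * 1) (fun s => s) (fun s => s - 1) y) as [I E].
  contpoly. contpoly.
  intros s Hs Hst; unfold G2; destruct Rle_dec; [ring|lra].
  intros s Hs Hst; unfold G2; destruct Rle_dec; [lra|ring].
  rewrite E, clamp_id by auto.
  rewrite (RInt_poly (fun s => s^2/2)).
  rewrite (RInt_poly (fun s => s^2/2 - s)).
  simpl; field.
  intros x; auto_derive; auto; simpl; field. contpoly.
  intros x; auto_derive; auto; simpl; field. contpoly.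
Qed.

Lemma U0 h : Uop h 0 = 0.
Proof. unfold Uop. rewrite (RInt_extR _ (fun _ => 0)). apply RInt_zeroR.
  intros s Hs. rewrite Rmin_left, Rmax_right in Hs by lra. unfold G0. destruct Rle_dec; [lra|]. field. Qed.
Lemma Y0 h : Yop h 0 = 0.
Proof. unfold Yop. rewrite (RInt_extR _ (fun _ => 0)). apply RInt_zeroR.
  intros s Hs. rewrite Rmin_left, Rmax_right in Hs by lra. unfold G1. destruct Rle_dec; [lra|]. ring. Qed.
Lemma Y1 h : Yop h 1 = 0.
Proof. unfold Yop. rewrite (RInt_extR _ (fun _ => 0)). apply RInt_zeroR.
  intros s Hs. rewrite Rmin_left, Rmax_right in Hs by lra. unfold G1. destruct Rle_dec; [|lra]. ring. Qed.
Lemma derZ h B : good h B -> forall x, 0 < x < 1 -> is_derive (Zop h) x (h x).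
Proof.
  intros [Hc Hb] x Hx. apply is_derive_Reals. intros eps Heps.
  destruct (Hc x ltac:(lra) (eps/2) ltac:(lra)) as [d [Hd Hcd]].
  assert (Hd' : 0 < Rmin d (Rmin x (1-x))) by (repeat apply Rmin_glb_lt; lra).
  exists (mkposreal _ Hd'). intros k Hk Hlt. simpl in Hlt.
  assert (Hlt1 : Rabs k < d) by (eapply Rlt_le_trans; [exact Hlt| apply Rmin_l]).
  assert (Hlt2 : Rabs k < Rmin x (1-x)) by (eapply Rlt_le_trans; [exact Hlt| apply Rmin_r]).
  assert (Hy : 0 <= x + k <= 1).
  { assert (Rmin x (1-x) <= x) by apply Rmin_l. assert (Rmin x (1-x) <= 1-x) by apply Rmin_r.
    unfold Rabs in Hlt2; destruct Rcase_abs; lra. }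
  remember (x + k) as y eqn:Ey.
  assert (Ik : ex_RInt (fun s => (G2 y s * h s - G2 x s * h s) - h x * (G2 y s * 1 - G2 x s * 1)) 0 1).
  { apply ex_RInt_minusR. apply ex_RInt_minusR; apply exG2; auto.
    apply ex_RInt_scalR. apply ex_RInt_minusR; apply exG2; apply cont_const1. }
  assert (Ek : Zop h y - Zop h x - k * h x = RInt (fun s => (G2 y s * h s - G2 x s * h s) - h x * (G2 y s * 1 - G2 x s * 1)) 0 1).
  { symmetry. assert (Ia : ex_RInt (fun s => G2 y s * h s) 0 1) by (apply exG2; auto).
    assert (Ib : ex_RInt (fun s => G2 x s * h s) 0 1) by (apply exG2; auto).
    assert (Ic : ex_RInt (fun s => G2 y s * 1) 0 1) by (apply exG2; apply cont_const1).
    assert (Id : ex_RInt (fun s => G2 x s * 1) 0 1) by (apply exG2; apply cont_const1).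
    rewrite (RInt_minusR (fun s => G2 y s * h s - G2 x s * h s) (fun s => h x * (G2 y s * 1 - G2 x s * 1))).
    rewrite (RInt_scalR (fun s => G2 y s * 1 - G2 x s * 1)).
    rewrite (RInt_minusR (fun s => G2 y s * h s) (fun s => G2 x s * h s)) by assumption.
    rewrite (RInt_minusR (fun s => G2 y s * 1) (fun s => G2 x s * 1)) by assumption.
    rewrite (intG2 y Hy), (intG2 x ltac:(lra)). unfold Zop. rewrite Ey. ring.
    apply ex_RInt_minusR; assumption.
    apply ex_RInt_minusR; assumption.
    apply ex_RInt_scalR, ex_RInt_minusR; assumption. }
  assert (Bk : Rabs (Zop h y - Zop h x - k * h x) <= eps/2 * (Rmax x y - Rmin x y)).
  { rewrite Ek. apply supp_bound. exact Ik.
    - intros s Hs.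
      replace (G2 y s * h s - G2 x s * h s - h x * (G2 y s * 1 - G2 x s * 1)) with
        ((G2 y s - G2 x s) * (h s - h x)) by ring.
      destruct (Rlt_dec s (Rmin x y)) as [H1|H1].
      { rewrite (proj2 (kerD2 x y s) (or_introl H1)). rewrite Rmult_0_l, Rabs_R0; lra. }
      destruct (Rlt_dec (Rmax x y) s) as [H2|H2].
      { rewrite (proj2 (kerD2 x y s) (or_intror H2)). rewrite Rmult_0_l, Rabs_R0; lra. }
      rewrite Rabs_mult. rewrite <- (Rmult_1_l (eps/2)).
      apply Rmult_le_compat; try apply Rabs_pos. apply kerD2. left. apply Hcd. auto.
      revert H1 H2 Hlt1; rewrite Ey; unfold Rmin, Rmax; destruct Rle_dec; unfold Rabs; repeat destruct Rcase_abs; lra.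
    - intros s Hs Hout.
      replace (G2 y s * h s - G2 x s * h s - h x * (G2 y s * 1 - G2 x s * 1)) with
        ((G2 y s - G2 x s) * (h s - h x)) by ring.
      rewrite (proj2 (kerD2 x y s) Hout). apply Rmult_0_l.
    - unfold Rmin, Rmax; destruct Rle_dec; lra. }
  assert (Hk0 : 0 < Rabs k) by (apply Rabs_pos_lt; auto).
  replace ((Zop h y - Zop h x) / k - h x) with ((Zop h y - Zop h x - k * h x) / k) by (field; auto).
  rewrite Rabs_div by auto. apply Rlt_div_l; auto.
  assert (Rmax x y - Rmin x y = Rabs k).
  { rewrite Ey; unfold Rmin, Rmax; destruct Rle_dec; unfold Rabs; destruct Rcase_abs; lra. }
  rewrite H in Bk. eapply Rle_lt_trans. exact Bk.
  apply Rmult_lt_compat_r; lra.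
Qed.


Lemma locally_interior (P : R -> Prop) x : 0 < x < 1 -> (forall y, 0 < y < 1 -> P y) -> locally x P.
Proof.
  intros Hx H. assert (Hd : 0 < Rmin x (1-x)) by (apply Rmin_glb_lt; lra).
  exists (mkposreal _ Hd). intros y Hy. apply H.
  change (Rabs (y - x) < Rmin x (1-x)) in Hy.
  assert (Rmin x (1-x) <= x) by apply Rmin_l. assert (Rmin x (1-x) <= 1-x) by apply Rmin_r.
  unfold Rabs in Hy; destruct Rcase_abs; lra.
Qed.

Lemma const01 g : continuous_on01 g -> (forall x, 0 < x < 1 -> is_derive g x 0) ->
  forall t, 0 <= t <= 1 -> g t = g 0.
Proof.
  intros Hc Hd t Ht.
  destruct (MVT_gen (fun s => g (clamp s)) 0 t (fun _ => 0)) as [c [_ Hm]].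
  - intros x Hx. rewrite Rmin_left, Rmax_right in Hx by lra.
    apply (is_derive_ext_loc g). apply locally_interior. lra.
    intros y Hy. rewrite clamp_id; auto; lra.
    apply Hd. lra.
  - intros x _. apply continuity_pt_filterlim. apply (cont_clamp g Hc).
  - rewrite !clamp_id in Hm by lra. lra.
Qed.


Lemma cont_of_derive (g dg : R -> R) : (forall x, is_derive g x (dg x)) -> continuous_on01 g.
Proof.
  intros H. apply (cont_on01_of g g). auto. intros x _.
  apply (@ex_derive_continuous R_AbsRing R_NormedModule). exists (dg x). apply H.
Qed.

Lemma contU h B : good h B -> continuous_on01 (Uop h).
Proof. intros G. apply (cont_of_derive _ (Yop h)). apply (derU h B G). Qed.
Lemma contY h B : good h B -> continuous_on01 (Yop h).
Proof. intros G. apply (cont_of_derive _ (Zop h)). apply (derY h B G). Qed.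
Lemma contZ h B : good h B -> continuous_on01 (Zop h).
Proof.
  intros G t Ht eps He. pose proof (lipZ h B G) as L.
  assert (HB : 0 <= B). { destruct G as [_ Hb]. specialize (Hb 0 ltac:(lra)). pose proof (Rabs_pos (h 0)). lra. }
  exists (eps / (B+1)). split. apply Rdiv_lt_0_compat; lra.
  intros t' _ Hlt. eapply Rle_lt_trans. apply L.
  apply Rlt_div_r in Hlt; [|lra].
  assert (0 <= Rabs (t' - t)) by apply Rabs_pos. nra.
Qed.

Lemma cont_minus g1 g2 : continuous_on01 g1 -> continuous_on01 g2 -> continuous_on01 (fun s => g1 s - g2 s).
Proof.
  intros H1 H2 t Ht eps He.
  destruct (H1 t Ht (eps/2) ltac:(lra)) as [d1 [Hd1 P1]].
  destruct (H2 t Ht (eps/2) ltac:(lra)) as [d2 [Hd2 P2]].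
  exists (Rmin d1 d2). split. apply Rmin_glb_lt; lra.
  intros t' Ht' Hlt.
  assert (Rabs (t'-t) < d1) by (eapply Rlt_le_trans; [exact Hlt|apply Rmin_l]).
  assert (Rabs (t'-t) < d2) by (eapply Rlt_le_trans; [exact Hlt|apply Rmin_r]).
  specialize (P1 t' Ht' H). specialize (P2 t' Ht' H0).
  replace (g1 t' - g2 t' - (g1 t - g2 t)) with ((g1 t' - g1 t) - (g2 t' - g2 t)) by ring.
  eapply Rle_lt_trans. apply Rabs_triang. rewrite Rabs_Ropp. lra.
Qed.

Lemma cont_lin c : continuous_on01 (fun s => c * s).
Proof.
  intros t Ht eps He. exists (eps / (Rabs c + 1)). split. pose proof (Rabs_pos c). apply Rdiv_lt_0_compat; lra.
  intros t' _ Hlt. replace (c * t' - c * t) with (c * (t' - t)) by ring. rewrite Rabs_mult.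
  pose proof (Rabs_pos c). apply Rlt_div_r in Hlt; [|lra].
  assert (0 <= Rabs (t' - t)) by apply Rabs_pos. nra.
Qed.

Lemma Uop_minus h1 h2 t : continuous_on01 h1 -> continuous_on01 h2 ->
  Uop h1 t - Uop h2 t = Uop (fun s => h1 s - h2 s) t.
Proof.
  intros C1 C2. unfold Uop. rewrite <- RInt_minusR by (apply exG0; auto).
  apply RInt_extR. intros; ring.
Qed.
Lemma Yop_minus h1 h2 t : continuous_on01 h1 -> continuous_on01 h2 ->
  Yop h1 t - Yop h2 t = Yop (fun s => h1 s - h2 s) t.
Proof.
  intros C1 C2. unfold Yop. rewrite <- RInt_minusR by (apply exG1; auto).
  apply RInt_extR. intros; ring.
Qed.
Lemma Zop_minus h1 h2 t : continuous_on01 h1 -> continuous_on01 h2 ->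
  Zop h1 t - Zop h2 t = Zop (fun s => h1 s - h2 s) t.
Proof.
  intros C1 C2. unfold Zop. rewrite <- RInt_minusR by (apply exG2; auto).
  apply RInt_extR. intros; ring.
Qed.

Lemma cont_comp M (f : R -> R -> R -> R -> R) a b c : continuous_on_D M f ->
  continuous_on01 a -> continuous_on01 b -> continuous_on01 c ->
  (forall t, 0 <= t <= 1 -> inD M t (a t) (b t) (c t)) ->
  continuous_on01 (fun t => f t (a t) (b t) (c t)).
Proof.
  intros Hf Ca Cb Cc Hin t Ht eps He.
  destruct (Hf _ _ _ _ (Hin t Ht) eps He) as [d [Hd P]].
  destruct (Ca t Ht d Hd) as [da [Hda Pa]].
  destruct (Cb t Ht d Hd) as [db [Hdb Pb]].
  destruct (Cc t Ht d Hd) as [dc [Hdc Pc]].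
  exists (Rmin (Rmin d da) (Rmin db dc)). split. repeat apply Rmin_glb_lt; lra.
  intros t' Ht' Hlt.
  assert (Rmin (Rmin d da) (Rmin db dc) <= Rmin d da) by apply Rmin_l.
  assert (Rmin (Rmin d da) (Rmin db dc) <= Rmin db dc) by apply Rmin_r.
  assert (Rmin d da <= d) by apply Rmin_l. assert (Rmin d da <= da) by apply Rmin_r.
  assert (Rmin db dc <= db) by apply Rmin_l. assert (Rmin db dc <= dc) by apply Rmin_r.
  apply P; auto. lra. apply Pa; auto; lra. apply Pb; auto; lra. apply Pc; auto; lra.
Qed.

Lemma sup_facts g K : (forall t, 0 <= t <= 1 -> Rabs (g t) <= K) ->
  (forall t, 0 <= t <= 1 -> Rabs (g t) <= supnorm01 g) /\ supnorm01 g <= K.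
Proof.
  intros H. unfold supnorm01.
  destruct (Lub_Rbar_correct (fun r => exists t, 0 <= t <= 1 /\ r = Rabs (g t))) as [Hub Hl].
  assert (HK : Rbar_le (Lub_Rbar (fun r => exists t, 0 <= t <= 1 /\ r = Rabs (g t))) K).
  { apply Hl. intros r [t [Ht ->]]. simpl. apply H; auto. }
  assert (H0 : Rbar_le (Rabs (g 0)) (Lub_Rbar (fun r => exists t, 0 <= t <= 1 /\ r = Rabs (g t)))).
  { apply Hub. exists 0. split; [lra|auto]. }
  destruct (Lub_Rbar (fun r => exists t, 0 <= t <= 1 /\ r = Rabs (g t))) as [l| |] eqn:E;
    simpl in HK, H0; try contradiction.
  split; auto. intros t Ht. specialize (Hub (Rabs (g t)) (ex_intro _ t (conj Ht eq_refl))).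
  simpl in Hub. auto.
Qed.


Lemma is_derive_minusR (f g : R -> R) x a b : is_derive f x a -> is_derive g x b ->
  is_derive (fun y => f y - g y) x (a - b).
Proof. intros H1 H2. exact (is_derive_minus f g x a b H1 H2). Qed.

Lemma cont_const c : continuous_on01 (fun _ => c).
Proof. intros t Ht eps He. exists 1. split. lra. intros. rewrite Rminus_diag, Rabs_R0. lra. Qed.

Theorem theorem3
  (f : R -> R -> R -> R -> R) (M L0 L1 L2 : R)
  (HM : 0 < M)
  (Hcont : continuous_on_D M f)
  (HL0 : 0 <= L0) (HL1 : 0 <= L1) (HL2 : 0 <= L2)
  (Hbound : forall t x y z, inD M t x y z -> Rabs (f t x y z) <= M)
  (Hlip : forall t x1 y1 z1 x2 y2 z2, inD M t x1 y1 z1 -> inD M t x2 y2 z2 ->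
     Rabs (f t x2 y2 z2 - f t x1 y1 z1)
       <= L0 * Rabs (x2 - x1) + L1 * Rabs (y2 - y1) + L2 * Rabs (z2 - z1))
  (Hq : L0 * M0 + L1 * M1 + L2 * M2 < 1)
  (u du ddu : R -> R)
  (Hu_c : continuous_on01 u) (Hdu_c : continuous_on01 du) (Hddu_c : continuous_on01 ddu)
  (Hu_d : forall t, 0 < t < 1 -> is_derive u t (du t))
  (Hdu_d : forall t, 0 < t < 1 -> is_derive du t (ddu t))
  (Hddu_d : forall t, 0 < t < 1 -> is_derive ddu t (f t (u t) (du t) (ddu t)))
  (Hbc0 : u 0 = 0) (Hbc1 : du 0 = 0) (Hbc2 : du 1 = 0)
  (Hub : forall t, 0 <= t <= 1 ->
     Rabs (u t) <= M0 * M /\ Rabs (du t) <= M1 * M /\ Rabs (ddu t) <= M2 * M) :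
  let q := L0 * M0 + L1 * M1 + L2 * M2 in
  let p := fun k : nat =>
    q ^ k / (1 - q) * supnorm01 (fun t => phi f 1 t - phi f 0 t) in
  (* the iterative method converges (uniformly on [0,1], with derivatives) *)
  (forall eps : R, 0 < eps -> exists N : nat, forall k : nat, (N <= k)%nat ->
     forall t, 0 <= t <= 1 ->
       Rabs (uk f k t - u t) < eps /\
       Rabs (Derive (uk f k) t - du t) < eps /\
       Rabs (Derive (Derive (uk f k)) t - ddu t) < eps) /\
  (* and the a priori error estimates *)
  (forall (k : nat) (t : R), 0 <= t <= 1 ->
       Rabs (uk f k t - u t) <= M0 * p k /\
       Rabs (Derive (uk f k) t - du t) <= M1 * p k /\
       Rabs (Derive (Derive (uk f k)) t - ddu t) <= M2 * p k).
Proof.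
  intros q p.
  assert (Hq0 : 0 <= q) by (unfold q, M0, M1, M2; lra).
  assert (Hq1 : q < 1) by exact Hq.
  set (A := fun (h : R -> R) t => f t (Uop h t) (Yop h t) (Zop h t)).
  assert (inD_of : forall h, good h M -> forall t, 0 <= t <= 1 -> inD M t (Uop h t) (Yop h t) (Zop h t)).
  { intros h [Hc Hb] t Ht. split; auto. split. apply boundG0; auto.
    split. apply boundG1; auto. apply boundG2; auto. }
  assert (goodA : forall h, good h M -> good (A h) M).
  { intros h G. split.
    - apply (cont_comp M); auto. apply (contU h M G). apply (contY h M G). apply (contZ h M G).
    - intros s Hs. apply Hbound. apply inD_of; auto. }
  assert (contr : forall h1 h2 d, good h1 M -> good h2 M ->
     (forall s, 0 <= s <= 1 -> Rabs (h1 s - h2 s) <= d) ->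
     forall t, 0 <= t <= 1 -> Rabs (A h1 t - A h2 t) <= q * d).
  { intros h1 h2 d G1 G2 Hd t Ht. unfold A.
    eapply Rle_trans. apply Hlip; apply inD_of; auto.
    assert (Gd : continuous_on01 (fun s => h1 s - h2 s)) by (apply cont_minus; [apply G1|apply G2]).
    rewrite (Uop_minus h1 h2 t), (Yop_minus h1 h2 t), (Zop_minus h1 h2 t) by (apply G1 || apply G2).
    pose proof (boundG0 _ d t Gd Hd Ht). pose proof (boundG1 _ d t Gd Hd Ht).
    pose proof (boundG2 _ d t Gd Hd Ht).
    unfold q.
    assert (L0 * Rabs (Uop (fun s => h1 s - h2 s) t) <= L0 * (M0 * d)) by (apply Rmult_le_compat_l; auto).
    assert (L1 * Rabs (Yop (fun s => h1 s - h2 s) t) <= L1 * (M1 * d)) by (apply Rmult_le_compat_l; auto).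
    assert (L2 * Rabs (Zop (fun s => h1 s - h2 s) t) <= L2 * (M2 * d)) by (apply Rmult_le_compat_l; auto).
    lra. }
  assert (phi_good : forall k, good (phi f k) M).
  { induction k.
    - change (good (fun t => f t ((fun _ => 0) t) ((fun _ => 0) t) ((fun _ => 0) t)) M).
      assert (H0 : forall t, 0 <= t <= 1 -> inD M t ((fun _ : R => 0) t) ((fun _ : R => 0) t) ((fun _ : R => 0) t)).
      { intros t Ht. unfold inD. rewrite Rabs_R0. unfold M0, M1, M2. repeat split; lra. }
      split. apply (cont_comp M); auto; apply cont_const.
      intros s Hs. apply Hbound. apply H0; auto.
    - change (good (A (phi f k)) M). apply goodA; auto. }
  set (Fs := fun t => f t (u t) (du t) (ddu t)).
  assert (GF : good Fs M).
  { split. apply (cont_comp M); auto. intros t Ht. destruct (Hub t Ht) as [? [? ?]]. split; auto.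
    intros s Hs. apply Hbound. destruct (Hub s Hs) as [? [? ?]]. split; auto. }
  set (c2 := ddu 0 - Zop Fs 0).
  assert (Z2 : forall t, 0 <= t <= 1 -> ddu t - Zop Fs t = c2).
  { intros t Ht. apply (const01 (fun t => ddu t - Zop Fs t)); auto.
    apply cont_minus; auto. apply (contZ Fs M GF).
    intros x Hx. replace 0 with (Fs x - Fs x) by ring. apply is_derive_minusR.
    apply Hddu_d; auto. apply (derZ Fs M GF); auto. }
  assert (Z1 : forall t, 0 <= t <= 1 -> du t - Yop Fs t - c2 * t = 0).
  { intros t Ht. rewrite (const01 (fun t => du t - Yop Fs t - c2 * t)); auto.
    rewrite Hbc1, Y0. ring.
    apply cont_minus. apply cont_minus; auto. apply (contY Fs M GF). apply cont_lin.
    intros x Hx. replace 0 with ((ddu x - Zop Fs x) - c2 * 1).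
    apply is_derive_minusR. apply is_derive_minusR. apply Hdu_d; auto. apply (derY Fs M GF).
    apply is_derive_Reals. apply derivable_pt_lim_scal. apply derivable_pt_lim_id.
    rewrite Z2 by lra. ring. }
  assert (Hc2 : c2 = 0).
  { specialize (Z1 1 ltac:(lra)). rewrite Hbc2, Y1 in Z1. lra. }
  assert (HZ : forall t, 0 <= t <= 1 -> ddu t = Zop Fs t).
  { intros t Ht. specialize (Z2 t Ht). lra. }
  assert (HY : forall t, 0 <= t <= 1 -> du t = Yop Fs t).
  { intros t Ht. specialize (Z1 t Ht). rewrite Hc2 in Z1. lra. }
  assert (HU : forall t, 0 <= t <= 1 -> u t = Uop Fs t).
  { intros t Ht.
    assert (E0 := const01 (fun t => u t - Uop Fs t)).
    assert (u t - Uop Fs t = u 0 - Uop Fs 0).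
    { apply E0; auto. apply cont_minus; auto. apply (contU Fs M GF).
      intros x Hx. replace 0 with (du x - Yop Fs x). apply is_derive_minusR. apply Hu_d; auto.
      apply (derU Fs M GF). rewrite HY by lra. ring. }
    rewrite Hbc0, U0 in H. lra. }
  assert (Fixed : forall t, 0 <= t <= 1 -> A Fs t = Fs t).
  { intros t Ht. unfold A. rewrite <- HU, <- HY, <- HZ by auto. reflexivity. }
  set (D := supnorm01 (fun t => phi f 1 t - phi f 0 t)).
  assert (HD : forall t, 0 <= t <= 1 -> Rabs (phi f 1 t - phi f 0 t) <= D).
  { apply (sup_facts _ (2*M)). intros t Ht. destruct (phi_good 1%nat) as [_ B1]. destruct (phi_good 0%nat) as [_ B0].
    specialize (B1 t Ht). specialize (B0 t Ht).
    eapply Rle_trans. apply Rabs_triang. rewrite Rabs_Ropp. lra. }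
  assert (HD0 : 0 <= D). { specialize (HD 0 ltac:(lra)). pose proof (Rabs_pos (phi f 1 0 - phi f 0 0)). lra. }
  set (e0 := supnorm01 (fun t => phi f 0 t - Fs t)).
  assert (He0 : forall t, 0 <= t <= 1 -> Rabs (phi f 0 t - Fs t) <= e0).
  { apply (sup_facts _ (2*M)). intros t Ht. destruct GF as [_ B1]. destruct (phi_good 0%nat) as [_ B0].
    specialize (B1 t Ht). specialize (B0 t Ht).
    eapply Rle_trans. apply Rabs_triang. rewrite Rabs_Ropp. lra. }
  assert (He0b : e0 <= D + q * e0).
  { apply (sup_facts (fun t => phi f 0 t - Fs t)). intros t Ht.
    replace (phi f 0 t - Fs t) with (- (phi f 1 t - phi f 0 t) + (A (phi f 0) t - A Fs t))
      by (rewrite Fixed by auto; change (A (phi f 0) t) with (phi f 1 t); ring).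
    eapply Rle_trans. apply Rabs_triang. rewrite Rabs_Ropp.
    pose proof (HD t Ht). pose proof (contr (phi f 0) Fs e0 (phi_good 0%nat) GF He0 t Ht). lra. }
  assert (He0D : e0 <= D / (1 - q)).
  { apply Rle_div_r; lra. }
  assert (errk : forall k s, 0 <= s <= 1 -> Rabs (phi f k s - Fs s) <= q ^ k * e0).
  { intros k; induction k as [|k IH]; intros s Hs.
    - simpl pow. rewrite Rmult_1_l. apply He0; auto.
    - change (phi f (S k) s) with (A (phi f k) s). rewrite <- (Fixed s Hs).
      simpl pow. rewrite Rmult_assoc. apply contr; auto. }
  assert (Hpk : forall k, q ^ k * e0 <= p k).
  { intros k. unfold p. fold D. pose proof (pow_le q k Hq0).
    replace (q ^ k / (1 - q) * D) with (q ^ k * (D / (1 - q))) by (field; lra).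
    apply Rmult_le_compat_l; auto. }
  assert (Main : forall k t, 0 <= t <= 1 ->
       Rabs (uk f k t - u t) <= M0 * p k /\
       Rabs (Derive (uk f k) t - du t) <= M1 * p k /\
       Rabs (Derive (Derive (uk f k)) t - ddu t) <= M2 * p k).
  { intros k t Ht.
    assert (Gk := phi_good k).
    assert (Cd : continuous_on01 (fun s => phi f k s - Fs s)) by (apply cont_minus; [apply Gk|apply GF]).
    assert (Hd1 : forall x, Derive (uk f k) x = Yop (phi f k) x).
    { intros x. apply is_derive_unique. change (is_derive (Uop (phi f k)) x (Yop (phi f k) x)).
      apply (derU _ M Gk). }
    assert (Hd2 : Derive (Derive (uk f k)) t = Zop (phi f k) t).
    { rewrite (Derive_ext _ _ t Hd1). apply is_derive_unique. apply (derY _ M Gk). }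
    pose proof (Hpk k).
    assert (0 <= q ^ k * e0) by (pose proof (Rabs_pos (phi f k 0 - Fs 0)); pose proof (errk k 0 ltac:(lra)); lra).
    split; [|split].
    - change (uk f k t) with (Uop (phi f k) t). rewrite HU, Uop_minus by (auto; apply Gk || apply GF).
      eapply Rle_trans. apply (boundG0 _ (q ^ k * e0) t Cd (errk k) Ht).
      apply Rmult_le_compat_l; auto. unfold M0; lra.
    - rewrite Hd1, HY, Yop_minus by (auto; apply Gk || apply GF).
      eapply Rle_trans. apply (boundG1 _ (q ^ k * e0) t Cd (errk k) Ht).
      apply Rmult_le_compat_l; auto. unfold M1; lra.
    - rewrite Hd2, HZ, Zop_minus by (auto; apply Gk || apply GF).
      eapply Rle_trans. apply (boundG2 _ (q ^ k * e0) t Cd (errk k) Ht).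
      apply Rmult_le_compat_l; auto. unfold M2; lra. }
  split; [|exact Main].
  intros eps Heps.
  assert (Hy : 0 < eps * (1 - q) / (D + 1)) by (apply Rdiv_lt_0_compat; [apply Rmult_lt_0_compat|]; lra).
  destruct (pow_lt_1_zero q ltac:(rewrite Rabs_right; lra) _ Hy) as [N HN].
  exists N. intros k Hk t Ht.
  specialize (HN k Hk). rewrite Rabs_right in HN by (apply Rle_ge, pow_le; auto).
  assert (Hp : 0 <= p k /\ p k < eps).
  { unfold p. fold D. pose proof (pow_le q k Hq0). split.
    apply Rmult_le_pos; auto. apply Rdiv_le_0_compat; lra.
    replace (q ^ k / (1 - q) * D) with (q ^ k * D / (1 - q)) by (field; lra).
    apply Rlt_div_l. lra.
    assert (q ^ k * D <= eps * (1 - q) / (D + 1) * D) by (apply Rmult_le_compat_r; lra).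
    assert (eps * (1 - q) / (D + 1) * D < eps * (1 - q)).
    { replace (eps * (1 - q) / (D + 1) * D) with ((eps * (1 - q)) * (D / (D + 1))) by (field; lra).
      rewrite <- (Rmult_1_r (eps * (1 - q))) at 2. apply Rmult_lt_compat_l.
      apply Rmult_lt_0_compat; lra. apply Rlt_div_l; lra. }
    lra. }
  destruct (Main k t Ht) as [B0 [B1 B2]].
  unfold M0, M1, M2 in *. repeat split; nra.
Qed.
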